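(* Let $m,p$ be positive integers and let $\gamma=(\gamma_{ik})\in\{0,1\}^{m\times p}$ satisfy $\sum_{k=1}^p\gamma_{ik}=1$ for every $i=1,\dots,m$. For each $i$ let $\pi(i)$ be the unique $k$ with $\gamma_{ik}=1$. Then $\gamma$ satisfies \[\sum_{j=1}^{i-1}\gamma_{jk}\;\ge\;\sum_{l=k+1}^{p}\gamma_{il}\qquad\text{for all } i\in\{1,\dots,m\},\ k\in\{1,\dots,p\}\text{ with } k\le i\] (an empty sum being $0$) if and only if $\pi(1)=1$ and $\pi(i)\le 1+\max_{j<i}\pi(j)$ for every $i=2,\dots,m$. Consequently, for every partition of $\{1,\dots,m\}$ into at most $p$ nonempty blocks there is exactly one such $\gamma$ satisfying these inequalities whose nonempty level sets $\{i:\pi(i)=k\}$ are exactly the blocks of the partition, and for this $\gamma$ the indices $k$ of the nonempty level sets are exactly $1,\dots,r$, where $r$ is the number of blocks. *)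

(* Defs.v *)
(* Indices are 0-based: row i : 'I_m stands for i+1,
   column k : 'I_p stands for k+1. *)
From mathcomp Require Import all_boot all_order all_algebra.
Set Implicit Arguments. Unset Strict Implicit. Unset Printing Implicit Defensive.

Definition assignment (m p : nat) (g : 'M[nat]_(m, p)) : Prop :=
  (forall i k, g i k <= 1) /\ (forall i, \sum_(k < p) g i k = 1).

Definition ordered_ineq (m p : nat) (g : 'M[nat]_(m, p)) : Prop :=
  forall (i : 'I_m) (k : 'I_p), k <= i ->
    \sum_(l < p | k < l) g i l <= \sum_(j < m | j < i) g j k.

Definition level (m p : nat) (g : 'M[nat]_(m, p)) (k : 'I_p) : {set 'I_m} :=
  [set i | g i k == 1].

Definition nonempty_levels (m p : nat) (g : 'M[nat]_(m, p)) : {set {set 'I_m}} :=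
  [set level g k | k in [set k : 'I_p | level g k != set0]].

(* Main.v *)
Require Import Defs.
From mathcomp Require Import all_boot all_order all_algebra.
Set Implicit Arguments. Unset Strict Implicit. Unset Printing Implicit Defensive.

Lemma gE m p (g : 'M[nat]_(m,p)) (pi : 'I_m -> 'I_p) :
  assignment g -> (forall i, g i (pi i) = 1) -> forall i l, g i l = (l == pi i).
Proof.
move=> [_ hs] hpi i l; case: eqP => [->|ne]; first by rewrite hpi.
have := hs i; rewrite (bigD1 (pi i)) //= hpi => /eqP.
rewrite -{2}[1]addn0 eqn_add2l sum_nat_eq0 => /forall_inP /(_ l).
by move=> /(_ (introN eqP ne)) /eqP.
Qed.

Lemma sum_ind (I : finType) (P : pred I) (a : I) :
  \sum_(l | P l) ((l == a) : nat) = P a.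
Proof.
case Pa: (P a).
  rewrite (bigD1 a) //= eqxx big1 // => l /andP[_ /negbTE ->] //.
by rewrite big1 // => l Pl; case: eqP => // e; rewrite e Pa in Pl.
Qed.

Definition Qp' m p (pi : 'I_m -> 'I_p) := forall (i:'I_m) (k:'I_p),
  k <= i -> k < pi i -> exists j : 'I_m, j < i /\ pi j = k.
Definition Qp m p (pi : 'I_m -> 'I_p) := forall (i:'I_m) (k:'I_p),
  k < pi i -> exists j : 'I_m, j < i /\ pi j = k.

Lemma ineq_iff m p (g : 'M[nat]_(m,p)) (pi : 'I_m -> 'I_p) :
  assignment g -> (forall i, g i (pi i) = 1) -> (ordered_ineq g <-> Qp' pi).
Proof.
move=> ha hpi; have E := gE ha hpi.
have L : forall i k, \sum_(l < p | k < l) g i l = (k < pi i).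
  move=> i k; rewrite (eq_bigr (fun l => ((l == pi i) : nat))) ?sum_ind //.
have R : forall i k, \sum_(j < m | j < i) g j k = \sum_(j < m | j < i) ((k == pi j) : nat).
  by move=> i k; apply: eq_bigr => j _; rewrite E.
split.
  move=> H i k ki kp; have := H i k ki; rewrite L R kp.
  case: (boolP [exists j : 'I_m, (j < i) && (k == pi j)]).
    by case/existsP => j /andP[ji /eqP ->]; exists j.
  rewrite negb_exists => /forallP Hn.
  rewrite big1 // => j ji; have := Hn j; rewrite ji /=; by case: eqP.
move=> H i k ki; rewrite L R; case kp: (k < pi i) => //.
have [j [ji pj]] := H i k ki kp.
by rewrite (bigD1 j) //= pj eqxx.
Qed.

Lemma Qp'_Qp m p (pi : 'I_m -> 'I_p) : Qp' pi -> Qp pi.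
Proof.
move=> H.
have le : forall n (i : 'I_m), i < n -> pi i <= i.
  elim=> [|n IH] i //= lin.
  rewrite leqNgt; apply/negP => lt.
  have ip : i < p by exact: ltn_trans lt (ltn_ord _).
  have [j [ji pj]] := H i (Ordinal ip) (leqnn _) lt.
  have := IH j (leq_trans ji lin); rewrite pj /= leqNgt ji //.
move=> i k kp; apply: (H i k _ kp); exact: leq_trans (ltnW kp) (le _ i (ltnSn i)).
Qed.

Lemma Qp_rgs m p (pi : 'I_m -> 'I_p) : Qp pi <->
  ((forall i : 'I_m, nat_of_ord i = 0 -> nat_of_ord (pi i) = 0) /\
   (forall i : 'I_m, 0 < i -> pi i <= 1 + \max_(j < m | j < i) nat_of_ord (pi j))).
Proof.
split.
  move=> H; split.
    move=> i i0; apply/eqP; rewrite -leqn0 leqNgt; apply/negP => lt.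
    have [j [ji _]] := H i (Ordinal (ltn_trans lt (ltn_ord _))) lt.
    by rewrite i0 in ji.
  move=> i i0; rewrite leqNgt; apply/negP => lt.
  have [j [ji pj]] := H i (Ordinal (ltn_trans lt (ltn_ord _))) lt.
  have := leq_bigmax_cond (F := fun j => nat_of_ord (pi j)) (P := fun j : 'I_m => j < i) j ji.
  by rewrite pj /= ltnn.
move=> [H0 H1].
have main : forall n (i : 'I_m), i < n -> forall k : 'I_p, k < pi i ->
    exists j : 'I_m, j < i /\ pi j = k.
  elim=> [|n IH] i //= lin k kp.
  case: (posnP i) => [i0|ipos]; first by rewrite H0 in kp.
  have m0 : 0 < m by apply: leq_ltn_trans (leq0n _) (ltn_ord i).
  have cA : 0 < #|[pred j : 'I_m | j < i]|.
    by apply/card_gt0P; exists (Ordinal m0).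
  have [j0 j0i Mj] := @eq_bigmax_cond _ [pred j : 'I_m | j < i] (fun j => nat_of_ord (pi j)) cA.
  have Mj' : \max_(j < m | j < i) nat_of_ord (pi j) = pi j0 := Mj.
  have := H1 i ipos; rewrite Mj' add1n => le1.
  have kle : k <= pi j0 by rewrite -ltnS; exact: leq_trans kp le1.
  case: (ltngtP k (pi j0)) => [klt|kgt|keq].
  - have [j [jj0 pj]] := IH j0 (leq_trans j0i lin) k klt.
    by exists j; split => //; exact: ltn_trans jj0 j0i.
  - by rewrite ltnNge kle in kgt.
  - by exists j0; split => //; apply: val_inj.
move=> i k kp; exact: main (ltnSn i) k kp.
Qed.

Lemma surj_lemma (T : finType) (S : {set T}) (F : T -> nat) :
  {in S &, injective F} -> (forall x, x \in S -> F x < #|S|) ->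
  forall k, k < #|S| -> exists2 x, x \in S & F x = k.
Proof.
move=> inj bd k kS.
have u : uniq (map F (enum S)).
  rewrite map_inj_in_uniq ?enum_uniq // => x y; rewrite !mem_enum; exact: inj.
have sub : {subset map F (enum S) <= iota 0 #|S|}.
  by move=> y /mapP [x]; rewrite mem_enum mem_iota add0n => /bd ? ->.
have sz : size (iota 0 #|S|) <= size (map F (enum S)) by rewrite size_iota size_map -cardE.
have [_ eqs] := uniq_min_size u sub sz.
have : k \in iota 0 #|S| by rewrite mem_iota add0n.
by rewrite -eqs => /mapP [x]; rewrite mem_enum => xS ->; exists x.
Qed.

Definition prec m (B C : {set 'I_m}) : bool := [exists x in B, [forall c in C, x < c]].
Definition Fblk m (P : {set {set 'I_m}}) (B : {set 'I_m}) := #|[set C in P | prec C B]|.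

Lemma minex m (B : {set 'I_m}) : B != set0 ->
  exists2 x, x \in B & forall c, c \in B -> x <= c.
Proof.
case/set0Pn => x0 x0B.
case: (arg_minnP (fun x : 'I_m => nat_of_ord x) x0B) => x xB H.
by exists x.
Qed.

Lemma prec_irr m (B : {set 'I_m}) : ~~ prec B B.
Proof.
apply/negP => /existsP [x /andP [xB /forall_inP /(_ x xB)]]; by rewrite ltnn.
Qed.

Lemma prec_trans m (B C D : {set 'I_m}) : prec B C -> prec C D -> prec B D.
Proof.
move=> /existsP [x /andP [xB /forall_inP Hx]] /existsP [y /andP [yC /forall_inP Hy]].
apply/existsP; exists x; rewrite xB /=; apply/forall_inP => d dD.
exact: ltn_trans (Hx y yC) (Hy d dD).
Qed.

Lemma prec_total m (P : {set {set 'I_m}}) (D : {set 'I_m}) B C :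
  partition P D -> B \in P -> C \in P -> B != C -> prec B C || prec C B.
Proof.
case/and3P => _ triv n0 BP CP BC.
have Bn : B != set0 by apply: contraNneq n0 => <-.
have Cn : C != set0 by apply: contraNneq n0 => <-.
have dis := (trivIsetP triv) B C BP CP BC.
have [x xB Hx] := minex Bn; have [y yC Hy] := minex Cn.
have xy : x != y.
  apply: contraTneq dis => exy; rewrite -setI_eq0; apply/set0Pn; exists y.
  by rewrite inE yC -exy xB.
case: (ltngtP x y) => [lt|gt|eq].
- apply/orP; left; apply/existsP; exists x; rewrite xB /=; apply/forall_inP => c cC.
  exact: leq_trans lt (Hy c cC).
- apply/orP; right; apply/existsP; exists y; rewrite yC /=; apply/forall_inP => c cB.
  exact: leq_trans gt (Hx c cB).
- by rewrite (val_inj eq) eqxx in xy.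
Qed.

Lemma Fblk_lt m (P : {set {set 'I_m}}) D B C : partition P D ->
  B \in P -> C \in P -> prec B C -> Fblk P B < Fblk P C.
Proof.
move=> hP BP CP BC; apply: proper_card; apply/properP; split.
  apply/subsetP => X; rewrite !inE => /andP [XP XB]; by rewrite XP (prec_trans XB BC).
by exists B; rewrite !inE ?BP ?BC ?prec_irr.
Qed.

Lemma Fblk_inj m (P : {set {set 'I_m}}) D : partition P D ->
  {in P &, injective (Fblk P)}.
Proof.
move=> hP B C BP CP e; case: (eqVneq B C) => // ne.
case/orP: (prec_total hP BP CP ne) => h.
  by have := Fblk_lt hP BP CP h; rewrite e ltnn.
by have := Fblk_lt hP CP BP h; rewrite e ltnn.
Qed.

Lemma Fblk_bd m (P : {set {set 'I_m}}) B : B \in P -> Fblk P B < #|P|.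
Proof.
move=> BP; apply: proper_card; apply/properP; split.
  by apply/subsetP => X; rewrite inE => /andP [].
by exists B => //; rewrite inE (negbTE (prec_irr B)) andbF.
Qed.


Lemma pb_mem m (P : {set {set 'I_m}}) i : partition P [set: 'I_m] -> pblock P i \in P.
Proof. by move=> hP; apply: pblock_mem; rewrite (cover_partition hP) inE. Qed.

Lemma pb_in m (P : {set {set 'I_m}}) i : partition P [set: 'I_m] -> i \in pblock P i.
Proof. by move=> hP; rewrite mem_pblock (cover_partition hP) inE. Qed.

Lemma f_kern m (P : {set {set 'I_m}}) i j : partition P [set: 'I_m] ->
  (Fblk P (pblock P i) == Fblk P (pblock P j)) = (j \in pblock P i).
Proof.
move=> hP; have triv : trivIset P by case/and3P: hP.
rewrite -eq_pblock ?(cover_partition hP) ?inE //.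
apply/eqP/eqP => [e|-> //]; exact: (Fblk_inj hP (pb_mem i hP) (pb_mem j hP)) e.
Qed.

Lemma f_Qp m (P : {set {set 'I_m}}) (i : 'I_m) (k : nat) : partition P [set: 'I_m] ->
  k < Fblk P (pblock P i) -> exists j : 'I_m, j < i /\ Fblk P (pblock P j) = k.
Proof.
move=> hP kl; have triv : trivIset P by case/and3P: hP.
pose S := [set C in P | prec C (pblock P i)].
have [C CS FC] : exists2 C, C \in S & Fblk P C = k.
  apply: surj_lemma => //.
    by move=> X Y; rewrite !inE => /andP [XP _] /andP [YP _]; exact: (@Fblk_inj _ _ _ hP X Y XP YP).
  move=> X; rewrite inE => /andP [XP Xi]; exact: Fblk_lt hP XP (pb_mem _ hP) Xi.
move: CS; rewrite inE => /andP [CP /existsP [x /andP [xC /forall_inP Hx]]].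
exists x; split; first exact: Hx i (pb_in _ hP).
by rewrite (def_pblock triv CP xC).
Qed.

Lemma pi_ex m p (g : 'M[nat]_(m,p)) : assignment g ->
  exists pi : 'I_m -> 'I_p, forall i, g i (pi i) = 1.
Proof.
move=> [h1 hs].
suff H : forall i, exists k : 'I_p, g i k = 1 by case/fin_all_exists: H => f hf; exists f.
move=> i.
case: (pickP (fun k => g i k == 1)) => [k /eqP hk|hn]; first by exists k.
have := hs i; rewrite big1 // => k _.
by have := h1 i k; have := hn k; case: (g i k) => [|[|n]].
Qed.

Lemma levelE m p (g : 'M[nat]_(m,p)) (pi : 'I_m -> 'I_p) :
  assignment g -> (forall i, g i (pi i) = 1) ->
  forall k, level g k = [set i | pi i == k].
Proof.
move=> ha hpi k; apply/setP => i; rewrite !inE (gE ha hpi) [pi i == k]eq_sym.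
by case: (k == pi i).
Qed.

Lemma kern_g m p (P : {set {set 'I_m}}) (g : 'M[nat]_(m,p)) (pi : 'I_m -> 'I_p) :
  partition P [set: 'I_m] -> assignment g -> (forall i, g i (pi i) = 1) ->
  nonempty_levels g = P -> forall i j, (pi i == pi j) = (j \in pblock P i).
Proof.
move=> hP ha hpi hL i j; have triv : trivIset P by case/and3P: hP.
have iL : i \in level g (pi i) by rewrite (levelE ha hpi) inE.
have LP : level g (pi i) \in P.
  rewrite -hL; apply/imsetP; exists (pi i) => //; rewrite inE; apply/set0Pn; by exists i.
rewrite (def_pblock triv LP iL) (levelE ha hpi) inE eq_sym //.
Qed.

Lemma rgs_unique m p (pi pi' : 'I_m -> 'I_p) : Qp pi -> Qp pi' ->
  (forall i j, (pi i == pi j) = (pi' i == pi' j)) -> forall i, pi i = pi' i.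
Proof.
move=> Q Q' K.
have main : forall n (i : 'I_m), i < n -> pi i = pi' i.
  elim=> [|n IH] i //= lin.
  case: (boolP [exists j : 'I_m, (j < i) && (pi j == pi i)]).
    case/existsP => j /andP [ji /eqP e].
    have e' : pi' j = pi' i by apply/eqP; rewrite -K e.
    by rewrite -e -e' IH // (leq_trans ji lin).
  rewrite negb_exists => /forallP Hn.
  case: (ltngtP (pi i) (pi' i)) => [lt|gt|eq]; last exact: val_inj.
  - have [j [ji pj]] := Q' i (pi i) lt.
    have := Hn j; rewrite ji /= (IH j (leq_trans ji lin)) pj eqxx //.
  - have [j [ji pj]] := Q i (pi' i) gt.
    have := Hn j; rewrite ji /= K -(IH j (leq_trans ji lin)) pj eqxx //.
move=> i; exact: main (ltnSn i).
Qed.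

Definition g0 m p (P : {set {set 'I_m}}) : 'M[nat]_(m,p) :=
  \matrix_(i, k) ((nat_of_ord k == Fblk P (pblock P i)) : nat).

Lemma Qp_Qp' m p (pi : 'I_m -> 'I_p) : Qp pi -> Qp' pi.
Proof. by move=> H i k _; apply: H. Qed.

Lemma part2 m p (P : {set {set 'I_m}}) : partition P [set: 'I_m] -> #|P| <= p ->
  [/\ assignment (g0 p P), ordered_ineq (g0 p P), nonempty_levels (g0 p P) = P,
   (forall g, assignment g -> ordered_ineq g -> nonempty_levels g = P -> g = g0 p P) &
   (forall k : 'I_p, level (g0 p P) k != set0 <-> k < #|P|)].
Proof.
move=> hP hc; have triv : trivIset P by case/and3P: hP.
have n0 : set0 \notin P by case/and3P: hP.
have [pi0 hpi0] : exists pi0 : 'I_m -> 'I_p, forall i, nat_of_ord (pi0 i) = Fblk P (pblock P i).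
  by exists (fun i => Ordinal (leq_trans (Fblk_bd (pb_mem i hP)) hc)).
have hg : forall i, g0 p P i (pi0 i) = 1 by move=> i; rewrite mxE hpi0 eqxx.
have ha : assignment (g0 p P).
  split; first by move=> i k; rewrite mxE; case: (_ == _).
  move=> i; rewrite (eq_bigr (fun k => ((k == pi0 i) : nat))) ?(sum_ind xpredT) //.
  by move=> k _; rewrite mxE -hpi0.
have hQ : Qp pi0.
  move=> i k kp; rewrite hpi0 in kp; have [j [ji fj]] := f_Qp hP kp.
  by exists j; split => //; apply: val_inj; rewrite /= hpi0.
have ho : ordered_ineq (g0 p P) by apply/(ineq_iff ha hg); apply: Qp_Qp'.
have lev0 : forall i, level (g0 p P) (pi0 i) = pblock P i.
  move=> i; apply/setP => j; rewrite (levelE ha hg) inE -val_eqE /= !hpi0 eq_sym.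
  exact: f_kern.
have hl : nonempty_levels (g0 p P) = P.
  apply/setP => B; apply/imsetP/idP.
    case=> k; rewrite inE => /set0Pn [i] ik ->.
    have <- : pi0 i = k by move: ik; rewrite (levelE ha hg) inE => /eqP.
    by rewrite lev0 pb_mem.
  move=> BP; have : B != set0 by apply: contraNneq n0 => <-.
  case/set0Pn => i iB; exists (pi0 i); last by rewrite lev0 (def_pblock triv BP iB).
  rewrite inE; apply/set0Pn; exists i; by rewrite (levelE ha hg) inE.
have hu : forall g, assignment g -> ordered_ineq g -> nonempty_levels g = P -> g = g0 p P.
  move=> g hag hog hlg; have [pi hpi] := pi_ex hag.
  have hQg : Qp pi by apply: Qp'_Qp; apply/(ineq_iff hag hpi).
  have K : forall i j, (pi i == pi j) = (pi0 i == pi0 j).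
    by move=> i j; rewrite (kern_g hP hag hpi hlg) (kern_g hP ha hg hl).
  have E := rgs_unique hQg hQ K.
  by apply/matrixP => i k; rewrite (gE hag hpi) (gE ha hg) E.
split => // k; rewrite (levelE ha hg); split.
  by case/set0Pn => i; rewrite inE => /eqP <-; rewrite hpi0 Fblk_bd // pb_mem.
move=> kP.
have [B BP FB] := surj_lemma (@Fblk_inj _ _ _ hP) (@Fblk_bd _ P) kP.
have : B != set0 by apply: contraNneq n0 => <-.
case/set0Pn => i iB; apply/set0Pn; exists i; rewrite inE -val_eqE /= hpi0.
by rewrite (def_pblock triv BP iB) FB.
Qed.

Theorem mainTheorem4 (m p : nat) (hm : 0 < m) (hp : 0 < p) :
  (forall (g : 'M[nat]_(m, p)), assignment g ->
   forall pi : 'I_m -> 'I_p, (forall i, g i (pi i) = 1) ->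
   (ordered_ineq g <->
      ((forall i : 'I_m, nat_of_ord i = 0 -> nat_of_ord (pi i) = 0) /\
       (forall i : 'I_m, 0 < i ->
          pi i <= 1 + \max_(j < m | j < i) nat_of_ord (pi j)))))
  /\
  (forall P : {set {set 'I_m}}, partition P [set: 'I_m] -> #|P| <= p ->
     (exists! g : 'M[nat]_(m, p),
        assignment g /\ ordered_ineq g /\ nonempty_levels g = P)
     /\
     (forall g : 'M[nat]_(m, p),
        assignment g -> ordered_ineq g -> nonempty_levels g = P ->
        forall k : 'I_p, level g k != set0 <-> k < #|P|)).
Proof.
split.
  move=> g ha pi hpi; split => H.
    by apply/Qp_rgs; apply: Qp'_Qp; apply/(ineq_iff ha hpi).
  by apply/(ineq_iff ha hpi); apply: Qp_Qp'; apply/Qp_rgs.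
move=> P hP hc; have [ha ho hl hu hk] := part2 hP hc; split.
  exists (g0 p P); split => // g [hag [hog hlg]]; by rewrite (hu g).
by move=> g hag hog hlg; rewrite (hu g hag hog hlg).
Qed.
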